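(* Let $G\in\mathcal{G}^{\rm SSP}$ be a nonempty graph. Then the join $G\vee H$ belongs to $\mathcal{G}^{\rm SSP}$ whenever the graph $H$ satisfies one of the following: (a) $H\in\mathcal{G}^{\rm SSP}$; (b) the complement $H^c$ is a disjoint union of trees and unicyclic graphs whose cycles have odd length.
   Context: All graphs are finite, simple, undirected. The join $G\vee H$ is the disjoint union of $G$ and $H$ together with all edges joining a vertex of $G$ to a vertex of $H$. A unicyclic graph is a connected graph with exactly one cycle. For a graph $G$ on $\{1,\ldots,n\}$, $\mathcal{S}(G)$ is the set of real symmetric $n\times n$ matrices $A=(a_{ij})$ with $a_{ij}\neq0$ iff $\{i,j\}\in E(G)$ for $i\neq j$ (diagonal arbitrary). A real symmetric $A$ has the strong spectral property (SSP) if the only real symmetric $X$ with $A\circ X=0$, $I\circ X=0$, $AX-XA=0$ is $X=0$ ($\circ$ = entrywise product). $\mathcal{G}^{\rm SSP}$ is the set of graphs $G$ such that every matrix in $\mathcal{S}(G)$ has the SSP. *)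

(* Defs.v *)
From mathcomp Require Import all_boot all_order all_algebra.
From mathcomp Require Import reals.

Set Implicit Arguments.
Unset Strict Implicit.
Unset Printing Implicit Defensive.

Import Order.TTheory GRing.Theory Num.Theory.
Local Open Scope ring_scope.

Definition simple_graph (T : finType) (e : rel T) : Prop :=
  symmetric e /\ irreflexive e.

Definition in_S (R : realType) (n : nat) (e : rel 'I_n) (A : 'M[R]_n) : Prop :=
  A^T = A /\ (forall i j : 'I_n, i != j -> (A i j != 0) = e i j).

Definition hadamard (R : realType) (n : nat) (A B : 'M[R]_n) : 'M[R]_n :=
  \matrix_(i, j) (A i j * B i j).

Definition SSP (R : realType) (n : nat) (A : 'M[R]_n) : Prop :=
  A^T = A /\
  forall X : 'M[R]_n, X^T = X ->
    hadamard A X = 0 -> hadamard 1%:M X = 0 -> A *m X - X *m A = 0 ->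
    X = 0.

Definition in_GSSP (R : realType) (n : nat) (e : rel 'I_n) : Prop :=
  forall A : 'M[R]_n, in_S e A -> SSP A.

(* Join of G (on 'I_n) and H (on 'I_m), on 'I_(n + m): vertices of G come
   first (lshift), then those of H (rshift). *)
Definition join (n m : nat) (e1 : rel 'I_n) (e2 : rel 'I_m) : rel 'I_(n + m) :=
  fun i j =>
    match split i, split j with
    | inl a, inl b => e1 a b
    | inr a, inr b => e2 a b
    | _, _ => true
    end.

Definition complement (T : finType) (e : rel T) : rel T :=
  fun i j => (i != j) && ~~ e i j.

(* A cycle of the graph, given by its cyclic vertex sequence
   v_0, ..., v_{k-1} (distinct, k >= 3, consecutive ones adjacent and
   v_{k-1} adjacent to v_0). *)
Definition graph_cycle (T : finType) (e : rel T) (s : seq T) : bool :=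
  [&& uniq s, (2 < size s)%N & cycle e s].

Definition cycle_edges (T : finType) (s : seq T) : {set {set T}} :=
  [set:: [seq [set p.1; p.2] | p <- zip s (rot 1 s)]].

(* e is a disjoint union of trees and unicyclic graphs whose cycles have odd
   length: every connected component contains at most one cycle (so it is a
   tree or a unicyclic graph), and every cycle has odd length. *)
Definition trees_odd_unicyclic (T : finType) (e : rel T) : Prop :=
  (forall s, graph_cycle e s -> odd (size s)) /\
  (forall s1 s2, graph_cycle e s1 -> graph_cycle e s2 ->
     (exists x y, [/\ x \in s1, y \in s2 & connect e x y]) ->
     cycle_edges s1 = cycle_edges s2).

(* Main.v *)
Require Import Defs.
From mathcomp Require Import all_boot all_order all_algebra.
From mathcomp Require Import reals.
From mathcomp Require Import zify ring.
From Stdlib Require Import Classical.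

Set Implicit Arguments.
Unset Strict Implicit.
Unset Printing Implicit Defensive.

Lemma maxP (P : nat -> Prop) B k0 : P k0 -> (forall k, P k -> (k <= B)%N) ->
  exists L, P L /\ forall k, P k -> (k <= L)%N.
Proof.
move=> Pk0 hB; apply: NNPP => H.
have: forall i, exists L, P L /\ (i <= L)%N.
  elim; first by exists k0.
  move=> i [L [PL iL]].
  have: ~ (forall k, P k -> (k <= L)%N) by move=> h; apply: H; exists L.
  move/not_all_ex_not => [k hk].
  have [Pk nk] := imply_to_and _ _ hk.
  exists k; split => //; lia.
move/(_ B.+1) => [L [PL BL]]; move: (hB _ PL); lia.
Qed.

Lemma cedges1 (T : finType) (C : seq T) e v :
  e \in cycle_edges C -> v \in e -> v \in C.
Proof.
rewrite /cycle_edges inE => /mapP [[a b] hp ->] /=; rewrite !inE => /orP[]/eqP->.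
  have : a \in unzip1 (zip C (rot 1 C)) by apply/mapP; exists (a, b).
  by rewrite unzip1_zip // size_rot.
have : b \in unzip2 (zip C (rot 1 C)) by apply/mapP; exists (a, b).
by rewrite unzip2_zip ?size_rot // mem_rot.
Qed.

Lemma cedges2 (T : finType) (C : seq T) v :
  v \in C -> exists e, e \in cycle_edges C /\ v \in e.
Proof.
move=> vC; have : v \in unzip1 (zip C (rot 1 C)) by rewrite unzip1_zip // size_rot.
move/mapP => [[a b] hp /= ->]; exists [set a; b]; split; last by rewrite set21.
by rewrite /cycle_edges inE; apply/mapP; exists (a, b).
Qed.

Lemma path_iota (T : Type) (F : rel T) (f : nat -> T) c a :
  (forall k, (a <= k)%N -> (k < a + c)%N -> F (f k) (f k.+1)) ->
  path F (f a) (map f (iota a.+1 c)) /\ last (f a) (map f (iota a.+1 c)) = f (a + c).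
Proof.
elim: c a => [|c IH] a h /=; first by rewrite addn0.
have [p1 p2] := IH a.+1 (fun k h1 h2 => h k (ltnW h1) ltac:(lia)).
rewrite p1 p2 addSnnS andbT; split => //; apply: h; lia.
Qed.

Definition ipath (T : Type) (s : rel T) (f : nat -> T) L :=
  (forall k, (k < L)%N -> s (f k) (f k.+1)) /\
  (forall k1 k2, (k1 <= L)%N -> (k2 <= L)%N -> f k1 = f k2 -> k1 = k2).

Lemma seg_cycle (T : finType) (s F : rel T) (f : nat -> T) L a b :
  subrel s F -> ipath s f L -> (a.+2 <= b)%N -> (b <= L)%N -> s (f b) (f a) ->
  graph_cycle F (map f (iota a (b - a).+1)).
Proof.
move=> sF [hp hi] ab bL sba; apply/and3P; split.
- rewrite map_inj_in_uniq ?iota_uniq // => x y; rewrite !mem_iota => /andP[_ hx] /andP[_ hy].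
  apply: hi; lia.
- rewrite size_map size_iota; lia.
- rewrite /= rcons_path.
  have [p1 p2] := @path_iota T F f (b - a) a (fun k h1 h2 => sF _ _ (hp k ltac:(lia))).
  rewrite p1 p2 /=; have -> : (a + (b - a) = b)%N by lia.
  exact: sF.
Qed.

Lemma ext_front (T : Type) (s : rel T) (f : nat -> T) L y :
  symmetric s -> ipath s f L -> s (f 0) y -> (forall k, (k <= L)%N -> f k <> y) ->
  ipath s (fun k => if k is k'.+1 then f k' else y) L.+1.
Proof.
move=> ssym [hp hi] sy ny; split.
  by case=> [|k] hk /=; [rewrite ssym | apply: hp].
case=> [|k1] [|k2] //= h1 h2.
- by move=> e; exfalso; apply: (ny k2) => //.
- by move=> e; exfalso; apply: (ny k1).
- by move=> e; congr S; apply: hi.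
Qed.

Lemma ext_back (T : Type) (s : rel T) (f : nat -> T) L y :
  ipath s f L -> s (f L) y -> (forall k, (k <= L)%N -> f k <> y) ->
  ipath s (fun k => if k == L.+1 then y else f k) L.+1.
Proof.
move=> [hp hi] sy ny; split.
  move=> k hk; case: (ltngtP k L) => h.
  - have -> : (k == L.+1) = false by lia.
    have -> : (k.+1 == L.+1) = false by lia.
    exact: hp.
  - lia.
  - by subst k; rewrite eqxx ltn_eqF.
move=> k1 k2 h1 h2.
case: eqP => e1; case: eqP => e2; try lia.
- move=> e; exfalso; apply: (ny k2) => //; lia.
- move=> e; exfalso; apply: (ny k1) => //; lia.
- move=> e; apply: hi => //; lia.
Qed.

Lemma conn (T : finType) (s F : rel T) (f : nat -> T) L k :
  subrel s F -> ipath s f L -> (k <= L)%N -> connect F (f 0) (f k).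
Proof.
move=> sF [hp _]; elim: k => [|k IH] hk; first exact: connect0.
apply: connect_trans (IH (ltnW hk)) _; apply: connect1; apply: sF; exact: hp.
Qed.

Definition longest (T : Type) (s : rel T) L :=
  forall g L', ipath s g L' -> (L' <= L)%N.

Lemma in_front (T : Type) (s : rel T) (f : nat -> T) L y :
  symmetric s -> ipath s f L -> longest s L -> s (f 0) y ->
  exists k, (k <= L)%N /\ f k = y.
Proof.
move=> ssym ip lg sy; apply: NNPP => H.
have ny : forall k, (k <= L)%N -> f k <> y by move=> k hk e; apply: H; exists k.
have := lg _ _ (ext_front ssym ip sy ny); lia.
Qed.

Lemma in_back (T : Type) (s : rel T) (f : nat -> T) L y :
  ipath s f L -> longest s L -> s (f L) y ->
  exists k, (k <= L)%N /\ f k = y.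
Proof.
move=> ip lg sy; apply: NNPP => H.
have ny : forall k, (k <= L)%N -> f k <> y by move=> k hk e; apply: H; exists k.
have := lg _ _ (ext_back ip sy ny); lia.
Qed.

Lemma key (T : finType) (s F : rel T) (f : nat -> T) L y :
  symmetric s -> irreflexive s -> subrel s F ->
  (forall u v, s u v -> exists w, w != v /\ s u w) ->
  trees_odd_unicyclic F ->
  ipath s f L -> longest s L -> s (f 0) y -> y = f 1 \/ y = f L.
Proof.
move=> ssym sirr sF deg [_ tou] ip lg sy.
have [j [jL fj]] := in_front ssym ip lg sy.
subst y.
case: j jL sy => [|[|j]] jL sy; first by rewrite sirr in sy.
  by left.
right.
have [hp hi] := ip.
have sL : s (f L) (f L.-1).
  have h := hp L.-1 ltac:(lia).
  have e : L.-1.+1 = L by lia.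
  by rewrite e in h; rewrite ssym.
have [w [wn sw]] := deg _ _ sL.
have [i [iL fi]] := in_back ip lg sw.
subst w.
have iL' : (i.+2 <= L)%N.
  have n1 : i <> L.-1 by move=> ei; rewrite ei eqxx in wn.
  have n2 : i <> L by move=> ei; rewrite ei sirr in sw.
  lia.
have C0 := seg_cycle sF ip (isT : (0.+2 <= j.+2)%N) jL ltac:(by rewrite ssym).
have C1 := seg_cycle sF ip iL' (leqnn L) sw.
have e : cycle_edges [seq f i | i <- iota 0 (j.+2 - 0).+1] =
         cycle_edges [seq f i | i <- iota i (L - i).+1].
  apply: tou C0 C1 _; exists (f 0), (f L); split.
  - by apply: map_f; rewrite mem_iota.
  - by apply: map_f; rewrite mem_iota; lia.
  - exact: (conn sF ip (leqnn L)).
have fLC1 : f L \in map f (iota i (L - i).+1) by apply: map_f; rewrite mem_iota; lia.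
have [ed [edin fLe]] := cedges2 fLC1.
rewrite -e in edin.
have /mapP [k kin fk] := cedges1 edin fLe.
move: kin; rewrite mem_iota => kr.
have := hi L k (leqnn L) ltac:(lia) fk.
move=> ek; subst k.
have -> : j.+2 = L by lia.
by [].
Qed.
Section Ring.
Import Order.TTheory GRing.Theory Num.Theory.
Local Open Scope ring_scope.

Lemma graph_zero (R : realType) m (F : rel 'I_m) (Y : 'M[R]_m) (b : 'I_m -> R) :
  trees_odd_unicyclic F -> (forall u v, Y u v = Y v u) ->
  (forall u v, Y u v != 0 -> F u v) -> (forall u, Y u u = 0) ->
  (forall u, b u != 0) -> (forall j, \sum_k Y j k * b k = 0) -> Y = 0.
Proof.
move=> tou Ysym YF Ydiag bnz hsum.
apply/matrixP => u0 v0; rewrite mxE; apply: NNPP => /eqP nz0.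
pose s := fun u v => Y u v != 0.
have ssym : symmetric s by move=> u v; rewrite /s Ysym.
have sirr : irreflexive s by move=> u; rewrite /s Ydiag eqxx.
have sF : subrel s F by move=> u v; apply: YF.
have deg : forall u v, s u v -> exists w, w != v /\ s u w.
  move=> u v suv; apply: NNPP => H.
  have z : forall w, w != v -> Y u w = 0.
    move=> w wv; apply/eqP; apply: NNPP => h; apply: H; exists w; split => //; exact/negP.
  move: (hsum u); rewrite (bigD1 v) //= big1 ?addr0; last first.
    by move=> x xv; rewrite z // mul0r.
  by move/eqP; rewrite mulf_eq0 (negbTE suv) (negbTE (bnz v)).
pose P := fun L => exists f, ipath s f L.
have P1 : P 1%N.
  exists (fun k => if k is 0%N then u0 else v0); split.
    by case=> [|k] //= _; apply/eqP.
  case=> [|[|k1]] [|[|k2]] //= h1 h2 e; subst; by rewrite Ydiag eqxx in nz0.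
have Pb : forall L, P L -> (L <= m)%N.
  move=> L [f [_ hi]].
  have : (size (map f (iota 0 L.+1)) <= size (enum 'I_m))%N.
    apply: uniq_leq_size; last by move=> x; rewrite mem_enum.
    rewrite map_inj_in_uniq ?iota_uniq // => x y; rewrite !mem_iota => /andP[_ hx] /andP[_ hy].
    apply: hi; lia.
  rewrite size_map size_iota size_enum_ord; lia.
have [L [[f ip] mx]] := maxP P1 Pb.
have lg : longest s L by move=> g L' h; apply: mx; exists g.
have [hp hi] := ip.
have L1 : (1 <= L)%N by apply: mx.
have s01 : s (f 0%N) (f 1%N) by apply: hp.
have [y [yn sy]] := deg _ _ s01.
have [ey|ey] := key ssym sirr sF deg tou ip lg sy; first by rewrite ey eqxx in yn.
subst y.
have L2 : (2 <= L)%N.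
  have : L <> 1%N by move=> e; rewrite e eqxx in yn.
  lia.
pose N := L.+1.
have eN : N = L.+1 by [].
pose p := fun k => f (k %% N)%N.
have closed : forall a, s (p a) (p a.+1).
  move=> a; rewrite /p.
  have : (a.+1 %% N = (a %% N).+1 %% N)%N by rewrite -addn1 -modnDml addn1.
  move=> ->.
  have : (a %% N < N)%N by rewrite ltn_pmod.
  case: (ltngtP (a %% N)%N L) => h _.
  - rewrite (@modn_small (a %% N).+1); first by apply: hp.
    by lia.
  - lia.
  - by rewrite h modnn ssym.
have rot : forall t, ipath s (fun k => f ((k + t) %% N))%N L.
  move=> t; split.
    by move=> k _; have := closed (k + t)%N; rewrite /p addSn.
  move=> k1 k2 h1 h2 e.
  have := hi ((k1 + t) %% N)%N ((k2 + t) %% N)%N ltac:(have := ltn_pmod (k1 + t)%N (isT : (0 < N)%N); lia)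
                 ltac:(have := ltn_pmod (k2 + t)%N (isT : (0 < N)%N); lia) e.
  move/eqP; rewrite eqn_modDr !modn_small; [by move/eqP| lia | lia].
have pinj : forall a a', p a = p a' -> (a %% N = a' %% N)%N.
  move=> a a' e; apply: hi => //.
  - have := ltn_pmod a (isT : (0 < N)%N); lia.
  - have := ltn_pmod a' (isT : (0 < N)%N); lia.
have nb : forall a u, s (p a.+1) u -> u = p a.+2 \/ u = p a.
  move=> a u su.
  have := @key _ s F (fun k => f ((k + a.+1) %% N)%N) L u ssym sirr sF deg tou (rot a.+1) lg.
  rewrite add0n add1n => /(_ su) [->|->]; first by left.
  right; rewrite /p; have -> : (L + a.+1 = a + N)%N by lia.
  by rewrite modnDr.
have pne : forall a, p a != p a.+2.
  move=> a; apply/eqP => /pinj /eqP.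
  rewrite -addn2 -{1}(addn0 a) eqn_modDl mod0n modn_small; [by [] | lia].
have eq2 : forall a, Y (p a.+1) (p a) * b (p a) + Y (p a.+1) (p a.+2) * b (p a.+2) = 0.
  move=> a; rewrite -(hsum (p a.+1)) (bigD1 (p a)) //= (bigD1 (p a.+2)) /=; last first.
    by rewrite eq_sym pne.
  rewrite addrA big1 ?addr0 // => x /andP[x1 x2].
  case: (eqVneq (Y (p a.+1) x) 0) => [->|nz]; first by rewrite mul0r.
  by case: (nb a x nz) => ex; [rewrite ex eqxx in x2 | rewrite ex eqxx in x1].
pose c := fun k => Y (p k) (p k.+1) * b (p k) * b (p k.+1).
have crec : forall k, c k.+1 = - c k.
  move=> k; apply/eqP; rewrite -addr_eq0 /c [Y (p k) _]Ysym.
  have -> : Y (p k.+1) (p k.+2) * b (p k.+1) * b (p k.+2) +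
     Y (p k.+1) (p k) * b (p k) * b (p k.+1) =
     b (p k.+1) * (Y (p k.+1) (p k) * b (p k) + Y (p k.+1) (p k.+2) * b (p k.+2)) by ring.
  by rewrite eq2 mulr0.
have cpow : forall k, c k = (-1) ^+ k * c 0%N.
  elim=> [|k IH]; first by rewrite expr0 mul1r.
  by rewrite crec IH exprS mulN1r mulNr.
have cN : c N = c 0%N.
  rewrite /c /p modnn mod0n.
  have -> : (N.+1 %% N = 1 %% N)%N by rewrite -addn1 modnDl.
  by [].
have oddN : odd N.
  have C := seg_cycle sF ip L2 (leqnn L) ltac:(by rewrite ssym).
  have [todd _] := tou; have := todd _ C; rewrite size_map size_iota subn0.
  by rewrite eN.
have c0 : c 0%N = 0.
  have e : c 0%N = - c 0%N by rewrite -{1}cN cpow -signr_odd oddN expr1 mulN1r.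
  have : c 0%N *+ 2 = 0 by rewrite mulr2n {1}e addNr.
  by move/eqP; rewrite mulrn_eq0 /= => /eqP.
move: c0; rewrite /c /p mod0n modn_small; last by lia.
move/eqP; rewrite !mulf_eq0 (negbTE (bnz _)) (negbTE (bnz _)) !orbF.
by rewrite (negbTE s01).
Qed.

Lemma split_l n m (i : 'I_n) : split (lshift m i) = inl i.
Proof. exact: (unsplitK (inl i)). Qed.
Lemma split_r n m (j : 'I_m) : split (rshift n j) = inr j.
Proof. exact: (unsplitK (inr j)). Qed.

Lemma had1 (R : realType) k (Y : 'M[R]_k) : (forall i, Y i i = 0) -> hadamard 1%:M Y = 0.
Proof.
move=> d; apply/matrixP => i j; rewrite !mxE.
by case: (eqVneq i j) => [->|ne]; [rewrite d mulr0 | rewrite mul0r].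
Qed.

Lemma mxent (R : realType) k (M N : 'M[R]_k) i j : M = N -> M i j = N i j.
Proof. by move=> ->. Qed.

Theorem corollary5p2 (R : realType) (n m : nat)
    (eG : rel 'I_n) (eH : rel 'I_m) :
  simple_graph eG -> simple_graph eH ->
  (0 < n)%N -> in_GSSP R eG ->
  (in_GSSP R eH \/ trees_odd_unicyclic (complement eH)) ->
  in_GSSP R (join eG eH).
Proof.
move=> [Gsym Girr] [Hsym Hirr] n0 GS Hcase A [AT Ae].
split => // X XT hAX h1X comm.
have eAX : forall i j, A i j * X i j = 0.
  by move=> i j; have := mxent i j hAX; rewrite !mxE.
have Xd : forall i, X i i = 0.
  by move=> i; have := mxent i i h1X; rewrite !mxE eqxx mul1r.
have Xs : forall i j, X i j = X j i.
  by move=> i j; have := mxent i j XT; rewrite !mxE.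
have As : forall i j, A i j = A j i.
  by move=> i j; have := mxent i j AT; rewrite !mxE.
move/eqP: comm; rewrite subr_eq0 => /eqP comm.
have ec : forall i j, (A *m X) i j = (X *m A) i j by move=> i j; rewrite comm.
have Across : forall i j, A (lshift m i) (rshift n j) != 0.
  move=> i j; rewrite Ae; first by rewrite /join split_l split_r.
  apply/eqP => /(congr1 val) /=; have := ltn_ord i; lia.
have Xcross : forall i j, X (lshift m i) (rshift n j) = 0.
  move=> i j; have := eAX (lshift m i) (rshift n j).
  by move/eqP; rewrite mulf_eq0 (negbTE (Across i j)) /= => /eqP.
have Xcross' : forall i j, X (rshift n j) (lshift m i) = 0.
  by move=> i j; rewrite Xs Xcross.
pose A1 := \matrix_(i, j) A (lshift m i) (lshift m j) : 'M[R]_n.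
pose X1 := \matrix_(i, j) X (lshift m i) (lshift m j) : 'M[R]_n.
have X1z : X1 = 0.
  have [_ S1] : SSP A1.
    apply: GS; split.
      by apply/matrixP => i j; rewrite !mxE As.
    move=> i j ij; rewrite mxE Ae /join ?split_l //.
  apply: S1.
  - by apply/matrixP => i j; rewrite !mxE Xs.
  - by apply/matrixP => i j; rewrite !mxE eAX.
  - by apply: had1 => i; rewrite mxE Xd.
  - apply/eqP; rewrite subr_eq0; apply/eqP/matrixP => i j.
    have := ec (lshift m i) (lshift m j); rewrite !mxE !big_split_ord /=.
    rewrite [X in _ + X = _]big1 ?addr0; last by move=> k _; rewrite Xcross' mulr0.
    rewrite [X in _ = _ + X]big1 ?addr0; last by move=> k _; rewrite Xcross mul0r.
    move=> e.
    rewrite (eq_bigr (fun k => A (lshift m i) (lshift m k) * X (lshift m k) (lshift m j)));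
      last by move=> k _; rewrite !mxE.
    rewrite [RHS](eq_bigr (fun k => X (lshift m i) (lshift m k) * A (lshift m k) (lshift m j)));
      last by move=> k _; rewrite !mxE.
    exact: e.
have X1e : forall i j, X (lshift m i) (lshift m j) = 0.
  by move=> i j; have := mxent i j X1z; rewrite !mxE.
pose A2 := \matrix_(i, j) A (rshift n i) (rshift n j) : 'M[R]_m.
pose X2 := \matrix_(i, j) X (rshift n i) (rshift n j) : 'M[R]_m.
have X2z : X2 = 0.
  case: Hcase => [HS | tou].
    have [_ S2] : SSP A2.
      apply: HS; split.
        by apply/matrixP => i j; rewrite !mxE As.
      move=> i j ij; rewrite mxE Ae /join ?split_r //.
      by apply: contra ij => /eqP /rshift_inj ->.
    apply: S2.
    - by apply/matrixP => i j; rewrite !mxE Xs.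
    - by apply/matrixP => i j; rewrite !mxE eAX.
    - by apply: had1 => i; rewrite mxE Xd.
    - apply/eqP; rewrite subr_eq0; apply/eqP/matrixP => i j.
      have := ec (rshift n i) (rshift n j); rewrite !mxE !big_split_ord /=.
      rewrite [X in X + _ = _]big1 ?add0r; last by move=> k _; rewrite Xcross mulr0.
      rewrite [X in _ = X + _]big1 ?add0r; last by move=> k _; rewrite Xcross' mul0r.
      move=> e.
      rewrite (eq_bigr (fun k => A (rshift n i) (rshift n k) * X (rshift n k) (rshift n j)));
        last by move=> k _; rewrite !mxE.
      rewrite [RHS](eq_bigr (fun k => X (rshift n i) (rshift n k) * A (rshift n k) (rshift n j)));
        last by move=> k _; rewrite !mxE.
      exact: e.
  pose i0 := Ordinal n0.
  apply: (@graph_zero R m (complement eH) X2 (fun k => A (lshift m i0) (rshift n k))) => //.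
  - by move=> u v; rewrite !mxE Xs.
  - move=> u v; rewrite mxE => nz; apply/andP; split.
      by apply: contra nz => /eqP ->; rewrite Xd.
    have := Ae (rshift n u) (rshift n v).
    rewrite /join !split_r => <-.
      have := eAX (rshift n u) (rshift n v).
      by move/eqP; rewrite mulf_eq0 (negbTE nz) orbF => ->.
    apply: contra nz => /eqP /rshift_inj ->; by rewrite Xd.
  - by move=> u; rewrite mxE Xd.
  - move=> j; have := ec (lshift m i0) (rshift n j); rewrite !mxE !big_split_ord /=.
    rewrite [X in X + _ = _]big1 ?add0r; last by move=> k _; rewrite Xcross mulr0.
    rewrite [X in _ = X + _]big1 ?add0r; last by move=> k _; rewrite X1e mul0r.
    rewrite [X in _ = X]big1; last by move=> k _; rewrite Xcross mul0r.
    move=> e; rewrite -[in RHS]e; apply: eq_bigr => k _; rewrite mxE Xs mulrC //.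
have X2e : forall i j, X (rshift n i) (rshift n j) = 0.
  by move=> i j; have := mxent i j X2z; rewrite !mxE.
apply/matrixP => i j; rewrite mxE.
case: (split_ordP i) => i' ->; case: (split_ordP j) => j' ->.
- exact: X1e.
- exact: Xcross.
- exact: Xcross'.
- exact: X2e.
Qed.
End Ring.
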